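(* Let $K\subseteq\mathbb R^2$ be a compact set containing no array on three points, let $f\in C(K)$, $\varepsilon>0$, and let $\delta>0$ be such that $|x_1-x_2|<2\delta$ implies $|f(x_1)-f(x_2)|<\varepsilon$ for all $x_1,x_2\in K$. There exists $n_0\in\mathbb N$ such that for every $n\ge n_0$ (and every choice of $f^n$ as in the context) there is a function $g^n:V(\Gamma^n)\to\mathbb R$ with the following properties: (1a) if $u_1u_2$ is an edge of $\Gamma^n_{\mathrm{short}}$ then $|g^n(u_1)-g^n(u_2)|\le\varepsilon$; (1b) if $u_1u_2$ is an edge of $\Gamma^n_{\mathrm{hor}}$ then $|f^n(u_1)-g^n(u_1)|\le\varepsilon$ and $|f^n(u_2)-g^n(u_2)|\le\varepsilon$; (1c) if $u_1u_2$ is an edge of $\Gamma^n_{\mathrm{vert}}$ then $g^n(u_1)=g^n(u_2)=0$; (2) $\max_{u\in V(\Gamma^n)}|g^n(u)|\le\max_{u\in V(\Gamma^n)}|f^n(u)|$.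
   Context: An array on three points is a triple $a_1,a_2,a_3$ of points in the plane with $a_1\ne a_2$, $a_2\ne a_3$, such that the segments $[a_1;a_2]$ and $[a_2;a_3]$ are each parallel to a coordinate axis and are mutually orthogonal. Let $p(x,y)=x$, $q(x,y)=y$; $|\cdot|$ on $\mathbb R^2$ is the Euclidean norm. For $n\in\mathbb N$ the graph $\Gamma^n$ has vertex set all lattice points $u=(i/2^n,j/2^n)$, $i,j\in\mathbb Z$, such that the square $S_u=[i/2^n;(i+1)/2^n)\times[j/2^n;(j+1)/2^n)$ meets $K$, and edges all two-element sets $\{u_1,u_2\}$ of vertices with $|p(u_1)-p(u_2)|\le 1/2^n$ or $|q(u_1)-q(u_2)|\le 1/2^n$. An edge $u_1u_2$ is vertical if $|p(u_1)-p(u_2)|\le1/2^n$, horizontal if $|q(u_1)-q(u_2)|\le1/2^n$, long if $|u_1-u_2|\ge\delta$, short if $|u_1-u_2|<\delta$. $\Gamma^n_{\mathrm{short}}$, $\Gamma^n_{\mathrm{hor}}$, $\Gamma^n_{\mathrm{vert}}$ are the subgraphs formed by all short edges, all long horizontal edges, and all long vertical edges respectively (with their endpoints). The function $f^n:V(\Gamma^n)\to\mathbb R$ is defined by fixing for each vertex $u$ a point $x_u\in K\cap S_u$ and setting $f^n(u)=f(x_u)$. *)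

(* Defs.v *)
From HB Require Import structures.
From mathcomp Require Import all_boot all_order all_algebra.
From mathcomp Require Import all_classical all_reals all_analysis.
Set Implicit Arguments. Unset Strict Implicit. Unset Printing Implicit Defensive.
Import Order.TTheory GRing.Theory Num.Theory.
Import numFieldNormedType.Exports.
Local Open Scope classical_set_scope.
Local Open Scope ring_scope.

Section Defs.
Variable R : realType.

Definition eucl (a b : R * R) : R :=
  Num.sqrt ((a.1 - b.1) ^+ 2 + (a.2 - b.2) ^+ 2).

Definition is_array3 (a1 a2 a3 : R * R) : Prop :=
  a1 <> a2 /\ a2 <> a3 /\
  ((a1.2 = a2.2 /\ a2.1 = a3.1) \/ (a1.1 = a2.1 /\ a2.2 = a3.2)).

Definition no_array3 (K : set (R * R)) : Prop :=
  ~ (exists a1 a2 a3, K a1 /\ K a2 /\ K a3 /\ is_array3 a1 a2 a3).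

Definition latpt (n : nat) (ij : int * int) : R * R :=
  (ij.1%:~R / 2 ^+ n, ij.2%:~R / 2 ^+ n).

Definition in_square (n : nat) (ij : int * int) (x : R * R) : Prop :=
  ij.1%:~R / 2 ^+ n <= x.1 < (ij.1 + 1)%:~R / 2 ^+ n /\
  ij.2%:~R / 2 ^+ n <= x.2 < (ij.2 + 1)%:~R / 2 ^+ n.

Definition vertex (K : set (R * R)) (n : nat) (ij : int * int) : Prop :=
  exists x, K x /\ in_square n ij x.

Definition edge (K : set (R * R)) (n : nat) (u1 u2 : int * int) : Prop :=
  vertex K n u1 /\ vertex K n u2 /\ u1 <> u2 /\
  (`|(latpt n u1).1 - (latpt n u2).1| <= 1 / 2 ^+ n \/
   `|(latpt n u1).2 - (latpt n u2).2| <= 1 / 2 ^+ n).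

Definition vertical (n : nat) (u1 u2 : int * int) : Prop :=
  `|(latpt n u1).1 - (latpt n u2).1| <= 1 / 2 ^+ n.
Definition horizontal (n : nat) (u1 u2 : int * int) : Prop :=
  `|(latpt n u1).2 - (latpt n u2).2| <= 1 / 2 ^+ n.
Definition long (delta : R) (n : nat) (u1 u2 : int * int) : Prop :=
  delta <= eucl (latpt n u1) (latpt n u2).
Definition short (delta : R) (n : nat) (u1 u2 : int * int) : Prop :=
  eucl (latpt n u1) (latpt n u2) < delta.

Definition short_edge K delta n u1 u2 := edge K n u1 u2 /\ short delta n u1 u2.
Definition hor_edge K delta n u1 u2 :=
  edge K n u1 u2 /\ long delta n u1 u2 /\ horizontal n u1 u2.
Definition vert_edge K delta n u1 u2 :=
  edge K n u1 u2 /\ long delta n u1 u2 /\ vertical n u1 u2.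

End Defs.

(* Main.v *)
Require Import Defs.
From HB Require Import structures.
From mathcomp Require Import all_boot all_order all_algebra.
From mathcomp Require Import all_classical all_reals all_analysis.
From mathcomp Require Import lra zify.
Unset Printing Implicit Defensive.
Import Order.TTheory GRing.Theory Num.Theory.
Import numFieldNormedType.Exports.
Local Open Scope classical_set_scope.
Local Open Scope ring_scope.

Section G.
Variable R : realType.

Lemma sq_bound n (u : int * int) (z : R * R) : in_square n u z ->
  `|z.1 - (latpt R n u).1| <= 1 / 2^+n /\ `|z.2 - (latpt R n u).2| <= 1 / 2^+n.
Proof.
rewrite /in_square /latpt /= => -[/andP[a b] /andP[c d]].
rewrite !intrD !mulrDl in b d.
by split; rewrite ler_norml; apply/andP; split; lra.
Qed.

Definition n1 (a b : R * R) := `|a.1 - b.1| + `|a.2 - b.2|.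
Definition al (a b : R * R) := Num.min `|a.1 - b.1| `|a.2 - b.2|.

Lemma nK (a : R) : `|a| ^+ 2 = a ^+ 2.
Proof. exact: real_normK (num_real a). Qed.

Lemma eucl_le_n1 (a b : R * R) : eucl a b <= n1 a b.
Proof.
rewrite /eucl /n1 -[X in _ <= X]ger0_norm ?addr_ge0 // -sqrtr_sqr.
apply: ler_wsqrtr.
have h1 := nK (a.1 - b.1); have h2 := nK (a.2 - b.2).
have p1 : 0 <= `|a.1 - b.1| by []. have p2 : 0 <= `|a.2 - b.2| by [].
nra.
Qed.

Lemma sqrt_lt (s d : R) : 0 < d -> (Num.sqrt s < d) <-> (s < d ^+ 2).
Proof.
move=> d0; rewrite -[X in X < d]/(Num.sqrt s) -{1}(ger0_norm (ltW d0)) -sqrtr_sqr.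
by rewrite ltr_sqrt // exprn_gt0.
Qed.
End G.
Arguments n1 {R}. Arguments al {R}. Arguments nK {R}. Arguments eucl_le_n1 {R}.
Arguments sqrt_lt {R}. Arguments sq_bound {R}.

Section S.
Variable R : realType.
Import ArrowAsProduct.
Definition cfg := nat -> R * R.

Lemma limit_le (q_ : nat -> cfg) (phi : cfg -> R) (p : cfg) :
  continuous phi -> (forall m, phi (q_ m) <= (m.+1%:R)^-1) ->
  cluster (q_ @ \oo) p -> phi p <= 0.
Proof.
move=> cphi Hq cl.
apply/ler_addgt0Pr => e e0; rewrite add0r.
have clo : closed (phi @^-1` [set y | y <= e]).
  by apply: preimage_closed; [move=> ? _; exact: cphi | exact: closed_le].
have Fq : (q_ @ \oo) (phi @^-1` [set y | y <= e]).
  have [N hN] : exists N : nat, (N.+1%:R)^-1 <= e.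
    exists (Num.truncn e^-1); have h := truncnS_gt (e^-1).
    rewrite -[X in _ <= X]invrK lef_pV2 ?posrE ?invr_gt0 //; exact: ltW.
  exists N => // m /= hm; apply: le_trans (Hq m) _; apply: le_trans hN.
  rewrite lef_pV2 ?posrE // ler_nat; exact: hm.
rewrite clusterE in cl.
have := cl _ Fq. rewrite closure_id in clo. by rewrite -clo.
Qed.

Lemma cont_c1 i : continuous (fun q : cfg => (q i).1).
Proof.
move=> q; apply: (@cvg_comp _ _ _ (fun q : cfg => q i) fst).
  exact: (@proj_continuous nat (fun _ => (R * R)%type) i q).
exact: cvg_fst.
Qed.
Lemma cont_c2 i : continuous (fun q : cfg => (q i).2).
Proof.
move=> q; apply: (@cvg_comp _ _ _ (fun q : cfg => q i) snd).
  exact: (@proj_continuous nat (fun _ => (R * R)%type) i q).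
exact: cvg_snd.
Qed.
Lemma cont_d1 i j : continuous (fun q : cfg => `|(q i).1 - (q j).1|).
Proof.
move=> q. have H := @cvg_norm R R^o _ (nbhs q) _ (fun q0 : cfg => (q0 i).1 - (q0 j).1) ((q i).1 - (q j).1). apply: H. apply: (@cvgB R R^o); [exact: cont_c1|exact: cont_c1].
Qed.

Lemma cont_d2 i j : continuous (fun q : cfg => `|(q i).2 - (q j).2|).
Proof.
move=> q. have H := @cvg_norm R R^o _ (nbhs q) _ (fun q0 : cfg => (q0 i).2 - (q0 j).2) ((q i).2 - (q j).2). apply: H.
apply: (@cvgB R R^o); [exact: cont_c2|exact: cont_c2].
Qed.
Lemma contD (f g : cfg -> R) : continuous f -> continuous g -> continuous (fun q => f q + g q).
Proof. move=> cf cg q; apply: (@cvgD R R^o _ (nbhs q)); [exact: cf|exact: cg]. Qed.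
Lemma contB (f g : cfg -> R) : continuous f -> continuous g -> continuous (fun q => f q - g q).
Proof. move=> cf cg q; apply: (@cvgB R R^o _ (nbhs q)); [exact: cf|exact: cg]. Qed.
Lemma contC (c : R) : continuous (fun q : cfg => c).
Proof. move=> q; apply: (@cvg_cst _ c _ (nbhs q)). Qed.
Lemma contm (f g : cfg -> R) : continuous f -> continuous g -> continuous (fun q => Num.min (f q) (g q)).
Proof. move=> cf cg q; exact: (@continuous_min R _ f g q (cf q) (cg q)). Qed.

Definition Good (K : set (R * R)) (delta : R) (k : nat) (t : R) (q : cfg) :=
  (forall i, K (q i)) /\ `|(q 0%N).1 - (q 1%N).1| <= t /\
  delta - n1 (q 0%N) (q 1%N) <= t /\
  (forall i, al (q i.+1) (q i.+2) <= t) /\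
  `|(q k.+1).2 - (q k.+2).2| <= t /\ delta - n1 (q k.+1) (q k.+2) <= t.

Lemma limit_good (K : set (R * R)) delta k : compact K ->
  (forall m : nat, exists q, Good K delta k (m.+1%:R^-1) q) ->
  exists q, Good K delta k 0 q.
Proof.
move=> cK H; have [q_ Hq] := choice H.
have cS : compact [set q : cfg | forall i, K (q i)].
  exact: (@tychonoff nat (fun _ => (R * R)%type) (fun _ => K)).
have [|p [Sp clp]] := cS (q_ @ \oo) _.
  by exists 0%N => // m _ /=; case: (Hq m).
exists p; split => //.
split; first by apply: (limit_le _ _ _ (cont_d1 0 1) _ clp) => m; case: (Hq m) => _ [].
split.
  apply: (limit_le _ _ _ (contB _ _ (contC delta) (contD _ _ (cont_d1 0 1) (cont_d2 0 1))) _ clp).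
  by move=> m; case: (Hq m) => _ [_ []].
split.
  move=> i; apply: (limit_le _ _ _ (contm _ _ (cont_d1 i.+1 i.+2) (cont_d2 i.+1 i.+2)) _ clp).
  by move=> m; case: (Hq m) => _ [_ [_ [h _]]]; exact: h.
split.
  apply: (limit_le _ _ _ (cont_d2 k.+1 k.+2) _ clp).
  by move=> m; case: (Hq m) => _ [_ [_ [_ []]]].
apply: (limit_le _ _ _ (contB _ _ (contC delta) (contD _ _ (cont_d1 k.+1 k.+2) (cont_d2 k.+1 k.+2))) _ clp).
by move=> m; case: (Hq m) => _ [_ [_ [_ []]]].
Qed.

Lemma abs0_eq (a b : R) : `|a - b| <= 0 -> a = b.
Proof. by rewrite normr_le0 subr_eq0 => /eqP. Qed.

Lemma n1_neq delta (a b : R * R) : 0 < delta -> delta - n1 a b <= 0 -> a <> b.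
Proof.
move=> d0 h eab; subst b; move: h; rewrite /n1 !subrr normr0 addr0 subr0.
by rewrite leNgt d0.
Qed.

Lemma al0 (a b : R * R) : al a b <= 0 -> a.1 = b.1 \/ a.2 = b.2.
Proof.
rewrite /al ge_min => /orP [h|h]; [left|right]; exact: (abs0_eq _ _).
Qed.

Lemma exact_good K delta k q : no_array3 K -> 0 < delta -> Good K delta k 0 q -> False.
Proof.
move=> nA d0 [Kq [h01 [l01 [hal [hk lk]]]]].
have claim : forall i, (i <= k)%N -> exists c, K c /\ c <> q i.+1 /\ c.1 = (q i.+1).1.
  elim=> [_|i IH lik].
    exists (q 0%N); split => //; split; first exact: (n1_neq delta _ _ d0 l01).
    exact: (abs0_eq _ _).
  have [c [Kc [cn c1]]] := IH (ltnW lik).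
  case: (eqVneq (q i.+2) (q i.+1)) => [e|ne].
    by exists c; rewrite e.
  case: (al0 _ _ (hal i)) => [e1|e2].
    by exists (q i.+1); split => //; split => //; move=> e; move: ne; rewrite e eqxx.
  exfalso; apply: nA; exists (q i.+2), (q i.+1), c; split => //; split => //; split => //.
  split; first exact/eqP.
  split; first by move=> e; apply: cn. by left.
have [c [Kc [cn c1]]] := claim k (leqnn k).
apply: nA; exists (q k.+2), (q k.+1), c; split => //; split => //; split => //.
split; first by move=> e; apply: (n1_neq delta _ _ d0 lk); rewrite e.
split; first by move=> e; apply: cn.
by left; split; [apply: esym; exact: (abs0_eq _ _)|].
Qed.

Lemma Good_mono K delta k t t' q : t <= t' -> Good K delta k t q -> Good K delta k t' q.
Proof.
move=> tt' [c1 [c2 [c3 [c4 [c5 c6]]]]].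
split => //; split; first exact: le_trans tt'.
split; first exact: le_trans tt'.
split; first by move=> i; exact: le_trans (c4 i) tt'.
split; exact: le_trans tt'.
Qed.

Lemma no_bad K delta k : compact K -> no_array3 K -> 0 < delta ->
  exists m : nat, forall t q, t <= m.+1%:R^-1 -> ~ Good K delta k t q.
Proof.
move=> cK nA d0; apply: contrapT => nex.
have H : forall m : nat, exists q, Good K delta k (m.+1%:R^-1) q.
  move=> m; apply: contrapT => H; apply: nex; exists m => t q tle G; apply: H; exists q.
  exact: Good_mono _ _ _ _ _ _ tle G.
have [q Gq] := limit_good K delta k cK H.
exact: (exact_good K delta k q nA d0 Gq).
Qed.
End S.

Section C.
Variable R : realType.
Definition clip (T a : R) := Num.max (- T) (Num.min T a).

Lemma clip_cases T a : 0 <= T ->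
  (clip T a = T /\ T <= a) \/ (clip T a = - T /\ a <= - T) \/
  (clip T a = a /\ - T <= a /\ a <= T).
Proof.
move=> T0; rewrite /clip.
have [h1|h1] : T <= a \/ a < T by case: leP; [left|right].
  have -> : Num.min T a = T by apply: min_l.
  rewrite max_r; last lra. by left.
have -> : Num.min T a = a by apply: min_r; lra.
have [h2|h2] : - T <= a \/ a < - T by case: leP; [left|right].
  by rewrite max_r //; right; right; split => //; split => //; lra.
by rewrite max_l; [right; left; split => //; lra | lra].
Qed.

Lemma abs_iff (a e : R) : `|a| <= e <-> - e <= a /\ a <= e.
Proof. by rewrite ler_norml; split => [/andP|[-> ->]]. Qed.

Lemma clip_lip T1 T2 a1 a2 e : 0 <= T1 -> 0 <= T2 ->
  `|T1 - T2| <= e -> `|a1 - a2| <= e -> `|clip T1 a1 - clip T2 a2| <= e.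
Proof.
move=> p1 p2 /abs_iff [h1 h2] /abs_iff [h3 h4]; apply/abs_iff.
case: (clip_cases T1 a1 p1) => [[-> ?]|[[-> ?]|[-> [? ?]]]];
case: (clip_cases T2 a2 p2) => [[-> ?]|[[-> ?]|[-> [? ?]]]].
split; lra.
split; lra.
split; lra.
split; lra.
split; lra.
split; lra.
split; lra.
split; lra.
split; lra.
Qed.

Lemma clip0 a : clip 0 a = 0.
Proof.
case: (clip_cases 0 a (lexx 0)) => [[-> ?]|[[-> ?]|[-> [? ?]]]]; lra.
Qed.

Lemma clip_abs T a : 0 <= T -> `|clip T a| <= `|a|.
Proof.
move=> T0; have k1 := ler_norm a; have k2 := ler_norm (- a); rewrite normrN in k2.
apply/abs_iff.
case: (clip_cases T a T0) => [[-> ?]|[[-> ?]|[-> [? ?]]]]; split; lra.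
Qed.

Lemma clip_id T a : `|a| <= T -> clip T a = a.
Proof.
move=> /[dup] h /abs_iff [h1 h2].
have T0 : 0 <= T by apply: le_trans h.
case: (clip_cases T a T0) => [[-> ?]|[[-> ?]|[-> [? ?]]]]; lra.
Qed.

Lemma nat_close (a b : nat) : (a <= b.+1)%N -> (b <= a.+1)%N ->
  `|a%:R - b%:R| <= (1 : R).
Proof.
move=> h1 h2.
have e1 : (a%:R : R) <= b%:R + 1 by rewrite natr1 ler_nat.
have e2 : (b%:R : R) <= a%:R + 1 by rewrite natr1 ler_nat.
by apply/abs_iff; split; lra.
Qed.
End C.
Arguments clip {R}.


Section L.
Variable R : realType.
Variables (K : set (R * R)) (delta : R) (n : nat) (x : int * int -> R * R).
Hypothesis hx : forall u, vertex K n u -> K (x u) /\ in_square n u (x u).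
Let h : R := 1 / 2 ^+ n.

Lemma h_gt0 : 0 < h.
Proof. by rewrite /h divr_gt0 // exprn_gt0. Qed.

Lemma vx u : vertex K n u -> K (x u) /\
  `|(x u).1 - (latpt R n u).1| <= h /\ `|(x u).2 - (latpt R n u).2| <= h.
Proof. by move=> /hx [Kx /sq_bound]. Qed.

Lemma tri (a b c d e : R) : `|a - c| <= e -> `|b - d| <= e ->
  `|c - d| <= `|a - b| + 2 * e.
Proof.
rewrite !ler_norml => /andP[h1 h2] /andP[h3 h4].
have k1 := ler_norm (a - b); have k2 := ler_norm (- (a - b)); rewrite normrN in k2.
apply/andP; split; lra.
Qed.

Lemma vert_c1 u1 u2 : vertex K n u1 -> vertex K n u2 -> vertical R n u1 u2 ->
  `|(x u1).1 - (x u2).1| <= 3 * h.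
Proof.
move=> /vx [_ [a1 _]] /vx [_ [a2 _]]; rewrite /vertical -/h => v.
rewrite distrC in a1; rewrite distrC in a2.
have := tri _ _ _ _ _ a1 a2; lra.
Qed.

Lemma hor_c2 u1 u2 : vertex K n u1 -> vertex K n u2 -> horizontal R n u1 u2 ->
  `|(x u1).2 - (x u2).2| <= 3 * h.
Proof.
move=> /vx [_ [_ a1]] /vx [_ [_ a2]]; rewrite /horizontal -/h => v.
rewrite distrC in a1; rewrite distrC in a2.
have := tri _ _ _ _ _ a1 a2; lra.
Qed.

Lemma edge_al u1 u2 : edge K n u1 u2 -> al (x u1) (x u2) <= 4 * h.
Proof.
move=> [v1 [v2 [_ [c|c]]]]; rewrite /al ge_min; apply/orP; [left|right].
  have := vert_c1 _ _ v1 v2 c; have := h_gt0; lra.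
have := hor_c2 _ _ v1 v2 c; have := h_gt0; lra.
Qed.

Lemma long_n1 u1 u2 : vertex K n u1 -> vertex K n u2 -> long delta n u1 u2 ->
  delta - n1 (x u1) (x u2) <= 4 * h.
Proof.
move=> w1 w2; rewrite /long => d.
have e := eucl_le_n1 (latpt R n u1) (latpt R n u2).
move: w1 w2 => /vx [_ [a1 b1]] /vx [_ [a2 b2]].
have t1 := tri _ _ _ _ _ a1 a2; have t2 := tri _ _ _ _ _ b1 b2.
move: e; rewrite /n1 => e; lra.
Qed.

Lemma short_eucl u1 u2 : vertex K n u1 -> vertex K n u2 -> short delta n u1 u2 ->
  4 * h <= delta -> eucl (x u1) (x u2) < 2 * delta.
Proof.
move=> w1 w2; rewrite /short => s hd.
have hp := h_gt0.
have d0 : 0 < delta by lra.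
move: s; rewrite /eucl sqrt_lt // => s.
rewrite sqrt_lt; last lra.
move: w1 w2 => /vx [_ [a1 b1]] /vx [_ [a2 b2]].
rewrite distrC in a1; rewrite distrC in b1.
rewrite distrC in a2; rewrite distrC in b2.
have t1 := tri _ _ _ _ _ a1 a2; have t2 := tri _ _ _ _ _ b1 b2.
set X1 := (x u1).1 - (x u2).1 in t1 *; set X2 := (x u1).2 - (x u2).2 in t2 *.
set L1 := (latpt R n u1).1 - (latpt R n u2).1 in s t1 *.
set L2 := (latpt R n u1).2 - (latpt R n u2).2 in s t2 *.
have p1 : 0 <= `|L1| by []. have p2 : 0 <= `|L2| by [].
have q1 : X1 ^+ 2 <= (`|L1| + 2 * h) ^+ 2.
  rewrite -(nK X1) ler_pXn2r ?nnegrE //; lra.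
have q2 : X2 ^+ 2 <= (`|L2| + 2 * h) ^+ 2.
  rewrite -(nK X2) ler_pXn2r ?nnegrE //; lra.
have r1 := nK L1; have r2 := nK L2.
have e1 : (`|L1| + 2 * h) ^+ 2 <= 2 * `|L1| ^+ 2 + 8 * h ^+ 2.
  have := sqr_ge0 (`|L1| - 2 * h); nra.
have e2 : (`|L2| + 2 * h) ^+ 2 <= 2 * `|L2| ^+ 2 + 8 * h ^+ 2.
  have := sqr_ge0 (`|L2| - 2 * h); nra.
have e3 : 16 * h ^+ 2 <= delta ^+ 2 by nra.
nra.
Qed.

Definition SE u1 u2 := short_edge K delta n u1 u2 \/ short_edge K delta n u2 u1.
Definition Vs w := exists v, vert_edge K delta n w v \/ vert_edge K delta n v w.
Definition Hs w := exists v, hor_edge K delta n w v \/ hor_edge K delta n v w.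
Fixpoint P (j : nat) (w : int * int) : Prop :=
  match j with
  | 0%N => Vs w
  | j'.+1 => P j' w \/ exists w', P j' w' /\ SE w' w
  end.

Lemma al_refl (a : R * R) : al a a <= 4 * h.
Proof. rewrite /al !subrr normr0 ge_min; apply/orP; left; have := h_gt0; lra. Qed.

Lemma edge_sym u1 u2 : edge K n u1 u2 -> edge K n u2 u1.
Proof.
move=> [v1 [v2 [ne c]]]; split => //; split => //; split; first by move=> e; apply: ne.
by rewrite distrC [`|(latpt R n u2).2 - _|]distrC.
Qed.

Definition chainP j w (q : nat -> R * R) :=
  [/\ (forall i, K (q i)), `|(q 0%N).1 - (q 1%N).1| <= 4 * h,
   delta - n1 (q 0%N) (q 1%N) <= 4 * h,
   (forall i, al (q i.+1) (q i.+2) <= 4 * h) &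
   (forall i, (j < i)%N -> q i = x w)].

Lemma chain j w : P j w -> vertex K n w /\ exists q, chainP j w q.
Proof.
elim: j w => [|j IH] w /=.
  move=> [v cv].
  have [ew [lwv vwv]] : edge K n w v /\ long delta n v w /\ vertical R n v w.
    case: cv => [[e [l v']]|[e [l v']]]; last by split => //; exact: edge_sym.
    split => //; split; last by rewrite /vertical distrC.
    move: l; rewrite /long /eucl.
    by rewrite -(sqrrN ((latpt R n w).1 - _)) -(sqrrN ((latpt R n w).2 - _)) !opprB.
  have [v1 [v2 _]] := ew.
  split => //; exists (fun i => if i == 0%N then x v else x w); split => //=.
  - by move=> [|i] /=; [exact: (hx _ v2).1|exact: (hx _ v1).1].
  - have := vert_c1 _ _ v2 v1 vwv; have := h_gt0; lra.
  - exact: long_n1.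
  - by move=> i; exact: al_refl.
  - by move=> [|i].
move=> [Pw|[w' [Pw' se]]].
  have [vw [q [c1 c2 c3 c4 c5]]] := IH w Pw; split => //; exists q; split => //.
  by move=> i ji; apply: c5; apply: ltnW.
have [vw' [q [c1 c2 c3 c4 c5]]] := IH w' Pw'.
have ew : edge K n w' w.
  by case: se => [[e _]|[e _]]; [exact: e|exact: edge_sym].
have [_ [vw _]] := ew.
split => //; exists (fun i => if (i <= j.+1)%N then q i else x w); split => //=.
- by move=> i; case: ifP => _; [exact: c1|exact: (hx _ vw).1].
- move=> i; case: (leqP i.+1 j.+1) => h1; case: (leqP i.+2 j.+1) => h2.
  + exact: c4.
  + have -> : i = j by lia.
    rewrite c5 //; exact: edge_al.
  + lia.
  + exact: al_refl.
- by move=> i hi; case: leqP => // h1; lia.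
Qed.

Lemma long_sym u1 u2 : long delta n u1 u2 -> long delta n u2 u1.
Proof.
rewrite /long /eucl.
by rewrite -(sqrrN ((latpt R n u1).1 - _)) -(sqrrN ((latpt R n u1).2 - _)) !opprB.
Qed.

Lemma H_good j u k0 : Hs u -> (j <= k0)%N -> P j u ->
  exists q, Good R K delta k0 (4 * h) q.
Proof.
move=> [v hv] jk Pj.
have [vu [q [c1 c2 c3 c4 c5]]] := chain j u Pj.
have [ee [ll hh]] : edge K n u v /\ long delta n u v /\ horizontal R n u v.
  case: hv => [[e [l hr]]|[e [l hr]]]; first by [].
  split; first exact: edge_sym.
  split; first exact: long_sym.
  by rewrite /horizontal distrC.
have [_ [vv _]] := ee.
have xu : q k0.+1 = x u by apply: c5; lia.
exists (fun i => if (i <= k0.+1)%N then q i else x v).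
split; first by move=> i; case: ifP => _; [exact: c1|exact: (hx _ vv).1].
split; first by [].
split; first by [].
split.
  move=> i; case: (leqP i.+1 k0.+1) => h1; case: (leqP i.+2 k0.+1) => h2.
  + exact: c4.
  + have -> : i = k0 by lia.
    rewrite xu; exact: edge_al.
  + lia.
  + exact: al_refl.
rewrite leqnn ltnn xu; split.
  have := hor_c2 _ _ vu vv hh; have := h_gt0; lra.
exact: long_n1.
Qed.

Definition D k0 w : nat := \sum_(j < k0.+1) ~~ `[< P j w >].

Lemma P_V w : Vs w -> forall j, P j w.
Proof. by move=> v; elim=> [|j IH] //=; left. Qed.

Lemma D_V k0 w : Vs w -> D k0 w = 0%N.
Proof. by move=> v; rewrite /D big1 // => j _; rewrite asboolT //; exact: P_V. Qed.

Lemma D_H k0 w : (forall j, (j <= k0)%N -> ~ P j w) -> D k0 w = k0.+1.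
Proof.
move=> H; rewrite /D (eq_bigr (fun=> 1%N)) => [|j _]; first by rewrite sum1_card card_ord.
by rewrite asboolF //; apply: H; rewrite -ltnS.
Qed.

Lemma D_short k0 u1 u2 : SE u1 u2 -> (D k0 u2 <= (D k0 u1).+1)%N.
Proof.
move=> se; rewrite /D big_ord_recl.
have A : (\sum_(i < k0) ~~ `[< P (lift ord0 i) u2 >] <= \sum_(i < k0) ~~ `[< P i u1 >])%N.
  apply: leq_sum => i _; case: (asboolP (P i u1)) => Pi /=; last exact: leq_b1.
  by rewrite asboolT //=; right; exists u1.
have B : (\sum_(i < k0) ~~ `[< P i u1 >] <= \sum_(j < k0.+1) ~~ `[< P j u1 >])%N.
  by rewrite big_ord_recr /= leq_addr.
have C := leq_b1 (~~ `[< P ord0 u2 >]).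
lia.
Qed.
End L.

Theorem mainTheorem5 (R : realType) (K : set (R * R)) (f : R * R -> R)
    (eps delta : R) :
  compact K -> no_array3 K -> {within K, continuous f} ->
  0 < eps -> 0 < delta ->
  (forall x1 x2, K x1 -> K x2 -> eucl x1 x2 < 2 * delta ->
     `|f x1 - f x2| < eps) ->
  exists n0 : nat, forall n : nat, (n0 <= n)%N ->
    forall x : int * int -> R * R,
      (forall u, vertex K n u -> K (x u) /\ in_square n u (x u)) ->
      (* f^n u := f (x u) *)
      exists g : int * int -> R,
        (forall u1 u2, short_edge K delta n u1 u2 -> `|g u1 - g u2| <= eps) /\
        (forall u1 u2, hor_edge K delta n u1 u2 ->
           `|f (x u1) - g u1| <= eps /\ `|f (x u2) - g u2| <= eps) /\
        (forall u1 u2, vert_edge K delta n u1 u2 -> g u1 = 0 /\ g u2 = 0) /\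
        (forall u, vertex K n u ->
           exists w, vertex K n w /\ `|g u| <= `|f (x w)|).

Proof.
move=> cK nA cf e0 d0 Hd.
have [M HM] : exists M : R, forall z, K z -> `|f z| <= M.
  have := compact_bounded (continuous_compact cf cK).
  move=> [M0 [_ HM0]]; exists (M0 + 1) => z Kz.
  by apply: (HM0 (M0 + 1)); [lra | exists z].
have [k0 Hk0] : exists k0 : nat, M <= eps * k0.+1%:R.
  exists (Num.truncn (M / eps)); have := truncnS_gt (M / eps).
  by rewrite ltr_pdivrMr // mulrC => /ltW.
have [m Hm] := no_bad R K delta k0 cK nA d0.
have [N HN] : exists N : nat, 4 * (N.+1%:R)^-1 <= Num.min (m.+1%:R^-1) delta.
  have c0 : 0 < Num.min (m.+1%:R^-1 : R) delta by rewrite lt_min d0 invr_gt0 ltr0n.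
  exists (Num.truncn (4 / Num.min (m.+1%:R^-1 : R) delta)).
  have := truncnS_gt (4 / Num.min (m.+1%:R^-1 : R) delta).
  rewrite ltr_pdivrMr // => h; rewrite ler_pdivrMr ?ltr0n // mulrC.
  exact: ltW.
exists N => n Nn x hx.
have hN : 4 * (1 / 2 ^+ n) <= Num.min (m.+1%:R^-1 : R) delta.
  apply: le_trans HN; rewrite div1r ler_pM2l // lef_pV2 ?posrE ?exprn_gt0 ?ltr0n //.
  rewrite -natrX ler_nat; apply: leq_ltn_trans Nn _; exact: ltn_expl.
have [h1 h2] : 4 * (1 / 2 ^+ n) <= (m.+1%:R^-1 : R) /\ 4 * (1 / 2 ^+ n) <= delta.
  by move: hN; rewrite le_min => /andP[].
pose T w := eps * (D R K delta n k0 w)%:R.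
have T0 : forall w, 0 <= T w by move=> w; rewrite /T mulr_ge0 // ltW.
exists (fun w => clip (T w) (f (x w))).
split.
  move=> u1 u2 se; have [e s] := se; have [v1 [v2 _]] := e.
  apply: clip_lip => //.
    have := nat_close R _ _ (D_short R K delta n k0 u1 u2 (or_introl se))
      (D_short R K delta n k0 u2 u1 (or_intror se)).
    rewrite /T -mulrBr normrM gtr0_norm // => hd; rewrite distrC in hd.
    by rewrite -[X in _ <= X]mulr1 ler_pM2l.
  apply: ltW; apply: Hd; [exact: (hx _ v1).1 | exact: (hx _ v2).1 |].
  exact: (short_eucl R K delta n x hx u1 u2 v1 v2 s h2).
have Hh : forall u, Hs R K delta n u -> `|f (x u) - clip (T u) (f (x u))| <= eps.
  move=> u hs.
  have vu : vertex K n u.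
    by case: hs => v [[[vu _] _]|[[_ [vu _]] _]].
  have nP : forall j, (j <= k0)%N -> ~ P R K delta n j u.
    move=> j jk Pj; have [q Gq] := H_good R K delta n x hx j u k0 hs jk Pj.
    exact: (Hm _ q h1 Gq).
  rewrite /T D_H // clip_id ?subrr ?normr0; first exact: ltW.
  exact: le_trans (HM _ (hx _ vu).1) Hk0.
split.
  by move=> u1 u2 he; split; apply: Hh; [exists u2; left | exists u1; right].
split.
  move=> u1 u2 ve; rewrite /T !D_V ?mulr0 ?clip0 //; [exists u1; right | exists u2; left] => //.
by move=> u vu; exists u; split => //; apply: clip_abs.
Qed.
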